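(* For every odd integer $q>1$ there exists a $q$-ary $2$-frameproof code of length $4$ and cardinality $2(q-1)^2+1$.
   Context: For $P\subseteq F^l$ over a finite alphabet $F$, $desc(P)=\{x\in F^l: \text{for every } i\in\{1,\ldots,l\} \text{ there is } y\in P \text{ with } x_i=y_i\}$. For an integer $c\geq 2$, a $c$-frameproof code of length $l$ is a subset $C\subseteq F^l$ with $desc(P)\cap C=P$ for every $P\subseteq C$ with $|P|\leq c$; it is $q$-ary if $|F|=q$. *)

(* Defs.v *)
From mathcomp Require Import all_boot.
Set Implicit Arguments. Unset Strict Implicit. Unset Printing Implicit Defensive.

Definition word (F : finType) (l : nat) := {ffun 'I_l -> F}.

Definition desc (F : finType) (l : nat) (P : {set word F l}) : {set word F l} :=
  [set x : word F l | [forall i : 'I_l, [exists y in P, x i == y i]]].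

Definition frameproof (F : finType) (l c : nat) (C : {set word F l}) : Prop :=
  forall P : {set word F l}, P \subset C -> #|P| <= c -> desc P :&: C = P.

(* Main.v *)
Require Import Defs.
From mathcomp Require Import all_boot zify.
Set Implicit Arguments. Unset Strict Implicit. Unset Printing Implicit Defensive.

Lemma two_elems (T : finType) (P : {set T}) :
  #|P| <= 2 -> (exists w, w \in P) ->
  exists y z, y \in P /\ z \in P /\ forall w, w \in P -> w = y \/ w = z.
Proof.
move=> Pc [w0 w0P]; rewrite cardE in Pc.
case E: (enum P) Pc => [|y [|z [|t r]]] //= _.
- by move: w0P; rewrite -mem_enum E.
- exists y, y; have yP : y \in P by rewrite -mem_enum E inE.
  by split=> // ; split=> // w; rewrite -mem_enum E inE => /eqP; left.
- have yP : y \in P by rewrite -mem_enum E !inE eqxx.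
  have zP : z \in P by rewrite -mem_enum E !inE eqxx orbT.
  exists y, z; split=> //; split=> // w; rewrite -mem_enum E !inE.
  by case/orP=> /eqP; [left|right].
Qed.

Definition triple_prop (F : finType) (C : {set word F 4}) :=
  forall x y z, x \in C -> y \in C -> z \in C -> x != y -> x != z ->
    exists i, (x i != y i) && (x i != z i).

Lemma fp_of_triple (F : finType) (C : {set word F 4}) :
  triple_prop C -> frameproof 2 C.
Proof.
move=> H P PC Pc; apply/setP => x; rewrite inE.
apply/andP/idP.
- case=> xd xC; apply/negPn/negP => xP.
  move: xd; rewrite inE => /forallP xd.
  have [w0 w0P] : exists w, w \in P.
    by have /existsP [w /andP [wP _]] := xd ord0; exists w.
  have [y [z [yP [zP Hyz]]]] := two_elems Pc (ex_intro _ w0 w0P).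
  have xy : x != y by apply/eqP => exy; rewrite exy yP in xP.
  have xz : x != z by apply/eqP => exz; rewrite exz zP in xP.
  have [i /andP [Hi1 Hi2]] := H x y z xC (subsetP PC y yP) (subsetP PC z zP) xy xz.
  have /existsP [w /andP [wP /eqP wi]] := xd i.
  by case: (Hyz w wP) => ew; move: wi; rewrite ew => wi; [move: Hi1|move: Hi2]; rewrite wi eqxx.
- move=> xP; split; last exact: (subsetP PC).
  rewrite inE; apply/forallP => i; apply/existsP; exists x; by rewrite xP eqxx.
Qed.

Definition cprop (F : finType) (C : {set word F 4}) :=
  forall x, x \in C -> exists c : 'I_4, forall y, y \in C -> y != x ->
    forall i j : 'I_4, i != c -> j != c -> i != j -> x i = y i -> x j = y j -> False.

Lemma triple_of_cprop (F : finType) (C : {set word F 4}) :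
  cprop C -> triple_prop C.
Proof.
move=> H x y z xC yC zC xy xz.
have [c Hc] := H x xC.
have Hy := Hc y yC; have Hz := Hc z zC.
rewrite eq_sym in xy; rewrite eq_sym in xz.
have key : forall a b d : 'I_4, a != c -> b != c -> d != c -> a != b -> a != d -> b != d ->
    exists i, (x i != y i) && (x i != z i).
  move=> a b d ac bc dc ab ad bd.
  case: (eqVneq (x a) (y a)) => ea; case: (eqVneq (x b) (y b)) => eb;
  try by case: (Hy xy a b ac bc ab ea eb).
  + case: (eqVneq (x d) (y d)) => ed; first by case: (Hy xy a d ac dc ad ea ed).
    case: (eqVneq (x b) (z b)) => fb; last by exists b; rewrite eb fb.
    case: (eqVneq (x d) (z d)) => fd; last by exists d; rewrite ed fd.
    by case: (Hz xz b d bc dc bd fb fd).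
  + case: (eqVneq (x d) (y d)) => ed; first by case: (Hy xy b d bc dc bd eb ed).
    case: (eqVneq (x a) (z a)) => fa; last by exists a; rewrite ea fa.
    case: (eqVneq (x d) (z d)) => fd; last by exists d; rewrite ed fd.
    by case: (Hz xz a d ac dc ad fa fd).
  + case: (eqVneq (x a) (z a)) => fa; last by exists a; rewrite ea fa.
    case: (eqVneq (x b) (z b)) => fb; last by exists b; rewrite eb fb.
    by case: (Hz xz a b ac bc ab fa fb).
clear Hy Hz; move: key; case: c Hc => [[|[|[|[|c]]]] cl] //= Hc key.
- by apply: (key (inord 1) (inord 2) (inord 3)); apply/eqP => /(congr1 val); rewrite /= !inordK.
- by apply: (key (inord 0) (inord 2) (inord 3)); apply/eqP => /(congr1 val); rewrite /= !inordK.
- by apply: (key (inord 0) (inord 1) (inord 3)); apply/eqP => /(congr1 val); rewrite /= !inordK.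
- by apply: (key (inord 0) (inord 1) (inord 2)); apply/eqP => /(congr1 val); rewrite /= !inordK.
Qed.

Definition tbl (v i : nat) : bool :=
  match v, i with 1, 3 => true | 2, 1 => true | 3, 2 => true | _, _ => false end.
Definition rk (v i : nat) : nat := if i < v then i else i.-1.
Definition mag (m v i a b : nat) : nat :=
  match rk v i with 0 => a | 1 => b | _ => (a + b) %% m end.
Definition sym (m : nat) (s : bool) (mu : nat) : nat := (mu + s * m).+1.
Definition par m := option ('I_4 * bool * 'I_m * 'I_m).
Definition cf m (p : par m) (i : 'I_4) : nat :=
  match p with
  | None => 0
  | Some (v, s, a, b) => if i == v then 0 else sym m (s (+) tbl v i) (mag m v i a b)
  end.
Definition enc m (p : par m) : word 'I_(m.*2).+1 4 := [ffun i => inord (cf p i)].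

Lemma tbl_ok (v w i j : 'I_4) (s s' : bool) : v != w -> i != v -> i != w -> j != v -> j != w ->
  i != j -> s (+) tbl v i = s' (+) tbl w i -> s (+) tbl v j = s' (+) tbl w j -> False.
Proof.
case: v => [[|[|[|[|v]]]] Hv] //; case: w => [[|[|[|[|w]]]] Hw] //;
case: i => [[|[|[|[|i]]]] Hi] //; case: j => [[|[|[|[|j]]]] Hj] //;
by case: s; case: s'.
Qed.

Lemma rk_ok (v i j : 'I_4) : i != v -> j != v -> i != j -> (rk v i < 3) && (rk v i != rk v j).
Proof.
by case: v => [[|[|[|[|v]]]] Hv] //; case: i => [[|[|[|[|i]]]] Hi] //;
case: j => [[|[|[|[|j]]]] Hj].
Qed.

Lemma mag_lt m v i a b : 0 < m -> a < m -> b < m -> mag m v i a b < m.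
Proof. by move=> m0 am bm; rewrite /mag; case: (rk v i) => [|[|n]] //; rewrite ltn_mod. Qed.

Lemma sym_inj m s s' mu mu' : mu < m -> mu' < m -> sym m s mu = sym m s' mu' -> s = s' /\ mu = mu'.
Proof. by rewrite /sym; case: s; case: s' => /= ? ? ; lia. Qed.

Lemma modD_inj m a b b' : b < m -> b' < m -> (a + b) %% m = (a + b') %% m -> b = b'.
Proof.
move=> bm b'm /eqP; rewrite eqn_modDl !modn_small // => /eqP //.
Qed.

Lemma mag_inj m (v i j : 'I_4) a b a' b' : a < m -> b < m -> a' < m -> b' < m ->
  i != v -> j != v -> i != j ->
  mag m v i a b = mag m v i a' b' -> mag m v j a b = mag m v j a' b' -> a = a' /\ b = b'.
Proof.
move=> am bm a'm b'm iv jv ij; have /andP [r3 rne] := rk_ok iv jv ij.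
have /andP [r3' _] : (rk v j < 3) && (rk v j != rk v i) by apply: rk_ok; rewrite // eq_sym.
rewrite /mag; move: r3 r3' rne; case: (rk v i) => [|[|[|?]]] //; case: (rk v j) => [|[|[|?]]] //= _ _ _.
- by move=> ea; rewrite -ea => /(modD_inj bm b'm) ->.
- move=> eb; rewrite -eb => H; split=> //; apply: (@modD_inj m b) => //.
  by rewrite addnC H addnC.
- by move=> H ea; move: H; rewrite -ea => /(modD_inj bm b'm) ->.
- move=> H eb; move: H; rewrite -eb => H; split=> //; apply: (@modD_inj m b) => //.
  by rewrite addnC H addnC.
Qed.


Lemma cf_lt m (p : par m) i : 0 < m -> cf p i < (m.*2).+1.
Proof.
move=> m0; case: p => [[[[v s] a] b]|] //=; case: (i == v) => //.
have := mag_lt v i m0 (ltn_ord a) (ltn_ord b); rewrite /sym -mul2n.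
by case: (s (+) tbl v i) => /=; lia.
Qed.

Lemma enc_eqE m (p p' : par m) i : 0 < m -> (enc p i = enc p' i) <-> cf p i = cf p' i.
Proof.
move=> m0; rewrite !ffunE; split; last by move=> ->.
by move/(congr1 (@nat_of_ord _)); rewrite !inordK // cf_lt.
Qed.

Lemma cf_zero m (v : 'I_4) s (a b : 'I_m) (i : 'I_4) : cf (Some (v, s, a, b) : par m) i = 0 -> i = v.
Proof. by rewrite /=; case: eqP. Qed.

Lemma same_class m (v : 'I_4) s (a b : 'I_m) s' (a' b' : 'I_m) (i j : 'I_4) : 0 < m ->
  i != v -> j != v -> i != j ->
  cf (Some (v, s, a, b)) i = cf (Some (v, s', a', b')) i ->
  cf (Some (v, s, a, b)) j = cf (Some (v, s', a', b')) j ->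
  (Some (v, s, a, b) : par m) = Some (v, s', a', b').
Proof.
move=> m0 iv jv ij; rewrite /= (negbTE iv) (negbTE jv).
move=> /(sym_inj (mag_lt _ _ m0 (ltn_ord _) (ltn_ord _)) (mag_lt _ _ m0 (ltn_ord _) (ltn_ord _))) [si mi].
move=> /(sym_inj (mag_lt _ _ m0 (ltn_ord _) (ltn_ord _)) (mag_lt _ _ m0 (ltn_ord _) (ltn_ord _))) [_ mj].
have [ea eb] := mag_inj (ltn_ord a) (ltn_ord b) (ltn_ord a') (ltn_ord b') iv jv ij mi mj.
have -> : s = s' by move: si; case: s; case: s'; case: (tbl v i).
by rewrite (val_inj ea) (val_inj eb).
Qed.

Lemma two_others (v : 'I_4) : exists i j : 'I_4, [/\ i != v, j != v & i != j].
Proof.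
case: v => [[|[|[|[|v]]]] Hv] //.
- by exists (@Ordinal 4 1 erefl), (@Ordinal 4 2 erefl).
- by exists (@Ordinal 4 0 erefl), (@Ordinal 4 2 erefl).
- by exists (@Ordinal 4 0 erefl), (@Ordinal 4 1 erefl).
- by exists (@Ordinal 4 0 erefl), (@Ordinal 4 1 erefl).
Qed.

Lemma sym_neq0 m s mu : sym m s mu <> 0.
Proof. by []. Qed.

Lemma C_cprop m : 0 < m -> cprop [set enc p | p : par m].
Proof.
move=> m0 x /imsetP [p _ ->].
case: p => [[[[v s] a] b]|].
- exists v => y /imsetP [p' _ ->] yx i j iv jv ij /(enc_eqE _ _ _ m0) ei /(enc_eqE _ _ _ m0) ej.
  case: p' yx ei ej => [[[[w s'] a'] b']|] yx ei ej.
  + case: (eqVneq w v) => wv.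
    * subst w; have E := same_class m0 iv jv ij ei ej.
      by rewrite E eqxx in yx.
    * have iw : i != w.
        apply/eqP=> E; move: ei; rewrite /= E eqxx.
        by rewrite E in iv; rewrite (negbTE iv); apply: sym_neq0.
      have jw : j != w.
        apply/eqP=> E; move: ej; rewrite /= E eqxx.
        by rewrite E in jv; rewrite (negbTE jv); apply: sym_neq0.
      move: ei ej; rewrite /= (negbTE iv) (negbTE jv) (negbTE iw) (negbTE jw).
      move=> /(sym_inj (mag_lt _ _ m0 (ltn_ord _) (ltn_ord _)) (mag_lt _ _ m0 (ltn_ord _) (ltn_ord _))) [si _].
      move=> /(sym_inj (mag_lt _ _ m0 (ltn_ord _) (ltn_ord _)) (mag_lt _ _ m0 (ltn_ord _) (ltn_ord _))) [sj _].
      rewrite eq_sym in wv.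
      exact: (tbl_ok wv iv iw jv jw ij si sj).
  + by move: ei => /cf_zero E; rewrite E eqxx in iv.
- exists ord0 => y /imsetP [p' _ ->] yx i j _ _ ij /(enc_eqE _ _ _ m0) ei /(enc_eqE _ _ _ m0) ej.
  case: p' yx ei ej => [[[[w s'] a'] b']|] yx ei ej; last by rewrite eqxx in yx.
  move: ei ej => /esym /cf_zero Ei /esym /cf_zero Ej.
  by rewrite Ei Ej eqxx in ij.
Qed.

Lemma enc_inj m : 0 < m -> injective (@enc m).
Proof.
move=> m0 p p' /ffunP E.
have H i : cf p i = cf p' i by apply/(enc_eqE _ _ _ m0)/E.
case: p p' H {E} => [[[[v s] a] b]|] [[[[w s'] a'] b']|] // H.
- have vw : v = w by apply: (@cf_zero m w s' a' b' v); rewrite -H /= eqxx.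
  subst w; have [i [j [iv jv ij]]] := two_others v.
  exact: (same_class m0 iv jv ij (H i) (H j)).
- have [i [j [iv _ _]]] := two_others v.
  by move: (H i); rewrite /= (negbTE iv) /sym.
- have [i [j [iv _ _]]] := two_others w.
  by move: (H i); rewrite /= (negbTE iv) /sym.
Qed.

Theorem theorem2 (q : nat) : odd q -> 1 < q ->
  exists C : {set word 'I_q 4},
    frameproof 2 C /\ #|C| = 2 * (q - 1) ^ 2 + 1.
Proof.
move=> oq q1.
have [m Hq] : exists m, q = m.*2.+1.
  by exists q./2; rewrite -[LHS](odd_double_half q) oq add1n.
subst q.
have m0 : 0 < m by move: q1; rewrite -mul2n; lia.
exists [set enc p | p : par m]; split.
- exact/fp_of_triple/triple_of_cprop/C_cprop.
- rewrite card_imset; last exact: enc_inj.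
  rewrite card_option !card_prod !card_ord card_bool subn1 /= -mul2n.
  rewrite !expnS expn0; lia.
Qed.
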